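(* Let $\vdash$ be a protoalgebraic logic with the inconsistency lemma and let $n\ge1$. Then $\vdash$ has the bounded top width $n$ law if and only if for every algebra $\boldsymbol{A}$ and every $F\in\mathsf{Spec}_\vdash(\boldsymbol{A})$ there are a positive integer $m\le n$ and maximal elements $G_1,\dots,G_m$ of $\mathsf{Spec}_\vdash(\boldsymbol{A})$ such that every $H\in\mathsf{Spec}_\vdash(\boldsymbol{A})$ with $F\subseteq H$ is contained in some $G_i$.
   Context: A logic $\vdash$ is a finitary, substitution-invariant consequence relation on the formulas $Fm(\vdash)$ of an algebraic language. It is protoalgebraic if there is a nonempty finite $\Delta(x,y)$ with $\emptyset\vdash\Delta(x,x)$ and $x,\Delta(x,y)\vdash y$. A finite set is inconsistent if it derives every formula. $\vdash$ has the inconsistency lemma (IL) if for each $n\ge1$ there is a finite set $\sim_n(x_1,\dots,x_n)$ of formulas such that for all finite $\Gamma\cup\{\varphi_1..\varphi_n\}$: $\Gamma\cup\{\varphi_1..\varphi_n\}$ is inconsistent iff $\Gamma\vdash\sim_n(\varphi_1..\varphi_n)$. Fixing such a family, for a finite set $\Gamma=\{\gamma_1..\gamma_n\}$ write $\sim\Gamma$ for $\sim_n(\gamma_1..\gamma_n)$, and $\sim(\gamma_1..\gamma_n)$ for $\sim\{\gamma_1..\gamma_n\}$. $\vdash$ has the bounded top width $n$ law if it validates the metarule: from $\Gamma,\sim(\sim(\gamma_i^1,\dots,\gamma_i^k)\cup\{\gamma_j^t: j<i,\,t\le k\})\vdash\psi$ for every $i\le n+1$, infer $\Gamma\vdash\psi$,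 for every $k\ge1$ and every finite $\Gamma\cup\{\gamma_1^1..\gamma_{n+1}^k,\psi\}\subseteq Fm(\vdash)$. A deductive filter of $\vdash$ on an algebra $\boldsymbol{A}$ is $F\subseteq A$ such that whenever $\Gamma\vdash\varphi$ and $h\colon\boldsymbol{Fm}(\vdash)\to\boldsymbol{A}$ is a homomorphism with $h[\Gamma]\subseteq F$, then $h(\varphi)\in F$. $\mathsf{Spec}_\vdash(\boldsymbol{A})$ is the poset (under inclusion) of meet irreducible deductive filters, i.e. $F\neq A$ that are not the intersection of two deductive filters both different from $F$. *)

(* Defs.v *)
From mathcomp Require Import all_boot.
From Stdlib Require List.
Set Implicit Arguments.
Unset Strict Implicit.
Unset Printing Implicit Defensive.

Record signature := Signature { sop : Type ; sarity : sop -> nat }.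

Inductive term (S : signature) : Type :=
| Var : nat -> term S
| App : forall o : sop S, ('I_(sarity o) -> term S) -> term S.

Arguments Var {S} _.
Arguments App {S} _ _.

Record algebra (S : signature) := Algebra {
  carrier :> Type ;
  interp : forall o : sop S, ('I_(sarity o) -> carrier) -> carrier }.

Definition Fm (S : signature) : algebra S := @Algebra S (term S) (@App S).

Definition is_hom (S : signature) (A B : algebra S) (h : A -> B) : Prop :=
  forall (o : sop S) (a : 'I_(sarity o) -> A),
    h (interp a) = interp (fun j => h (a j)).

Fixpoint subst (S : signature) (f : nat -> term S) (t : term S) : term S :=
  match t with
  | Var i => f i
  | App o a => App o (fun j => subst f (a j))
  end.

Fixpoint vars_in (S : signature) (P : nat -> Prop) (t : term S) : Prop :=
  match t with
  | Var i => P i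
  | App o a => forall j, vars_in P (a j)
  end.

Definition fset (S : signature) := term S -> Prop.
Definition set_of (S : signature) (l : seq (term S)) : fset S :=
  fun x => List.In x l.
Definition img (S : signature) (s : term S -> term S) (G : fset S) : fset S :=
  fun y => exists x, G x /\ y = s x.

Definition is_logic (S : signature) (D : fset S -> term S -> Prop) : Prop :=
  [/\ (forall (G : fset S) phi, G phi -> D G phi),
      (forall (G H : fset S) phi, (forall x, G x -> H x) -> D G phi -> D H phi),
      (forall (G H : fset S) phi,
          (forall x, H x -> D G x) -> D H phi -> D G phi),
      (forall (G : fset S) phi, D G phi ->
          exists l : seq (term S), (forall x, List.In x l -> G x) /\ D (set_of l) phi)
    & (forall (s : Fm S -> Fm S) (G : fset S) phi, is_hom s ->
          D G phi -> D (img s G) (s phi))].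

Definition protoalgebraic (S : signature) (D : fset S -> term S -> Prop) : Prop :=
  exists Delta : seq (term S),
    [/\ Delta <> [::],
        (forall d, List.In d Delta -> vars_in (fun i => i = 0 \/ i = 1) d),
        (forall d, List.In d Delta ->
            D (fun _ => False) (subst (fun i => if i == 1 then Var 0 else Var i) d))
      & D (set_of (Var 0 :: Delta)) (Var 1)].

Definition inconsistent (S : signature) (D : fset S -> term S -> Prop)
  (l : seq (term S)) : Prop := forall phi, D (set_of l) phi.

(* Given a family negf n = ~_n(x_0,...,x_{n-1}), the set ~(phi_1,...,phi_n). *)
Definition negl (S : signature) (negf : nat -> seq (term S))
  (l : seq (term S)) : seq (term S) :=
  map (subst (fun i => nth (Var i) l i)) (negf (size l)).

Definition IL_family (S : signature) (D : fset S -> term S -> Prop)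
  (negf : nat -> seq (term S)) : Prop :=
  (forall n, 1 <= n -> forall t, List.In t (negf n) -> vars_in (fun i => i < n) t)
  /\ (forall (G phis : seq (term S)), phis <> [::] ->
        (inconsistent D (G ++ phis) <->
         forall d, List.In d (negl negf phis) -> D (set_of G) d)).

(* bounded top width n law, w.r.t. the fixed IL family negf;
   gam i t = gamma_{i+1}^{t+1}, i <= n, t < k *)
Definition btw_law (S : signature) (D : fset S -> term S -> Prop)
  (negf : nat -> seq (term S)) (n : nat) : Prop :=
  forall (k : nat), 1 <= k ->
  forall (G : seq (term S)) (gam : nat -> nat -> term S) (psi : term S),
    (forall i, i <= n ->
       D (set_of (G ++ negl negf
                   (negl negf (map (gam i) (iota 0 k))
                    ++ flatten (map (fun j => map (gam j) (iota 0 k)) (iota 0 i)))))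
         psi) ->
    D (set_of G) psi.

Definition deductive_filter (S : signature) (D : fset S -> term S -> Prop)
  (A : algebra S) (F : A -> Prop) : Prop :=
  forall (G : fset S) (phi : term S) (h : Fm S -> A), is_hom h ->
    D G phi -> (forall g, G g -> F (h g)) -> F (h phi).

Definition same_set (T : Type) (X Y : T -> Prop) : Prop := forall x, X x <-> Y x.

Definition in_Spec (S : signature) (D : fset S -> term S -> Prop)
  (A : algebra S) (F : A -> Prop) : Prop :=
  [/\ deductive_filter D F,
      ~ same_set F (fun _ => True)
    & ~ (exists G H : A -> Prop,
           [/\ deductive_filter D G, deductive_filter D H,
               ~ same_set G F, ~ same_set H F
             & same_set F (fun a => G a /\ H a)])].

Definition maximal_in_Spec (S : signature) (D : fset S -> term S -> Prop)
  (A : algebra S) (G : A -> Prop) : Prop :=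
  in_Spec D G /\
  forall H : A -> Prop, in_Spec D H -> (forall a, G a -> H a) -> (forall a, H a -> G a).

(* Main.v *)
Require Import Defs.
From mathcomp Require Import all_boot.
From Stdlib Require List.
From mathcomp Require Import boolp classical_sets.
From mathcomp Require Import zify.
From Stdlib Require Import Classical ClassicalEpsilon FunctionalExtensionality.
Set Implicit Arguments.
Unset Strict Implicit.
Unset Printing Implicit Defensive.
Notation set_of := Defs.set_of.

Section Terms.
Variable S : signature.

Fixpoint eval (A : algebra S) (v : nat -> A) (t : term S) : A :=
  match t with
  | Var i => v i
  | App o a => interp (fun j => eval v (a j))
  end.

Lemma eval_ext (A : algebra S) (P : nat -> Prop) (v w : nat -> A) t :
  vars_in P t -> (forall i, P i -> v i = w i) -> eval v t = eval w t.
Proof.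
elim: t => [i|o a IH] /=; first by move=> Hi H; apply: H.
move=> Hj H; congr interp; apply: functional_extensionality => j.
exact: IH.
Qed.

Lemma eval_ext_all (A : algebra S) (v w : nat -> A) t :
  (forall i, v i = w i) -> eval v t = eval w t.
Proof.
move=> H; apply: (@eval_ext A (fun _ => True)) => //.
by elim: t => //= o a IH j.
Qed.

Lemma hom_eval (A : algebra S) (h : Fm S -> A) : is_hom h ->
  forall t, h t = eval (fun i => h (Var i)) t.
Proof.
move=> Hh; elim=> [i|o a IH] //=.
have -> : App o a = @interp S (Fm S) o a by [].
rewrite Hh; congr interp; apply: functional_extensionality => j; exact: IH.
Qed.

Lemma eval_is_hom (A : algebra S) (v : nat -> A) : is_hom (A := Fm S) (eval v).
Proof. by []. Qed.

Lemma subst_is_hom (f : nat -> term S) : is_hom (A := Fm S) (B := Fm S) (subst f).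
Proof. by []. Qed.

Lemma eval_subst (A : algebra S) (v : nat -> A) f t :
  eval v (subst f t) = eval (fun i => eval v (f i)) t.
Proof.
elim: t => [i|o a IH] //=; congr interp; apply: functional_extensionality => j.
exact: IH.
Qed.

Lemma subst_subst f g (t : term S) :
  subst f (subst g t) = subst (fun i => subst f (g i)) t.
Proof.
elim: t => [i|o a IH] //=; congr App; apply: functional_extensionality => j.
exact: IH.
Qed.

Lemma subst_ext (P : nat -> Prop) f g (t : term S) :
  vars_in P t -> (forall i, P i -> f i = g i) -> subst f t = subst g t.
Proof.
elim: t => [i|o a IH] /=; first by move=> Hi H; apply: H.
move=> Hj H; congr App; apply: functional_extensionality => j.
exact: IH.
Qed.

Lemma subst_Var (t : term S) : subst Var t = t.
Proof.
elim: t => [i|o a IH] //=; congr App; apply: functional_extensionality => j.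
exact: IH.
Qed.

Lemma eval_Var (t : term S) : eval (A := Fm S) Var t = t.
Proof.
elim: t => [i|o a IH] //=; rewrite /interp /=; congr App.
apply: functional_extensionality => j; exact: IH.
Qed.

Lemma vars_in_mono (P Q : nat -> Prop) (t : term S) :
  (forall i, P i -> Q i) -> vars_in P t -> vars_in Q t.
Proof. by move=> H; elim: t => [i|o a IH] /=; [apply: H| move=> Hj j; apply: IH]. Qed.

Lemma eval_Fm (v : nat -> term S) t : eval (A := Fm S) v t = subst v t.
Proof.
elim: t => [i|o a IH] //=; rewrite /interp /=; congr App.
apply: functional_extensionality => j; exact: IH.
Qed.

End Terms.

Lemma In_flatten (T : Type) (x : T) (L : seq (seq T)) :
  List.In x (flatten L) <-> exists l, List.In l L /\ List.In x l.
Proof.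
elim: L => [|l L IH] /=; first by split=> // [[l []]].
rewrite List.in_app_iff IH; split.
- by case=> [H|[l' [H1 H2]]]; [exists l; auto| exists l'; auto].
- by case=> l' [[<-|H1] H2]; [left| right; exists l'].
Qed.

Lemma In_nth (T : Type) (x0 : T) (s : seq T) i : i < size s -> List.In (nth x0 s i) s.
Proof. by elim: s i => [|x s IH] [|i] //= H; [left|right; apply: IH]. Qed.

Lemma In_nth_ex (T : Type) (x0 : T) (s : seq T) x : List.In x s ->
  exists2 i, i < size s & nth x0 s i = x.
Proof.
elim: s => [|y s IH] //= [->|/IH [i Hi Hx]]; first by exists 0.
by exists i.+1.
Qed.

Lemma In_iota i m k : List.In i (iota m k) <-> m <= i < m + k.
Proof.
elim: k m => [|k IH] m /=; first by split=> //; lia.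
rewrite IH; split; first by case=> [->|]; lia.
move=> H; case: (eqVneq m i) => [->|Hne]; [by left|right; lia].
Qed.

Definition fchoice (X Y : Type) (R : X -> Y -> Prop) :
  (forall x, exists y, R x y) -> exists f : X -> Y, forall x, R x (f x).
Proof.
move=> H; exists (fun x => proj1_sig (constructive_indefinite_description _ (H x))).
move=> x; exact: proj2_sig (constructive_indefinite_description _ (H x)).
Qed.

Definition dec (P : Prop) : bool := if excluded_middle_informative P then true else false.
Lemma decE (P : Prop) : dec P <-> P.
Proof. by rewrite /dec; case: excluded_middle_informative. Qed.

Section Logic.
Variable S : signature.
Variable D : fset S -> term S -> Prop.
Hypothesis HD : is_logic D.

Lemma Drefl G phi : G phi -> D G phi. Proof. by case: HD => H1 _ _ _ _; apply: H1. Qed.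
Lemma Dmono G H phi : (forall x, G x -> H x) -> D G phi -> D H phi. Proof. move=> HGH Hd; case: HD => _ H2 _ _ _; exact: H2 HGH Hd. Qed.
Lemma Dcut G H phi : (forall x, H x -> D G x) -> D H phi -> D G phi. Proof. move=> HGH Hd; case: HD => _ _ H3 _ _; exact: H3 HGH Hd. Qed.
Lemma Dfin G phi : D G phi -> exists l : seq (term S), (forall x, List.In x l -> G x) /\ D (set_of l) phi.
Proof. by case: HD => _ _ _ H4 _; apply: H4. Qed.
Lemma Dsubst f l phi : D (set_of l) phi -> D (set_of (map (subst f) l)) (subst f phi).
Proof.
case: HD => _ _ _ _ H5 /(H5 (subst f) _ _ (@subst_is_hom S f)).
apply: Dmono => x [y [Hy ->]]; exact: List.in_map.
Qed.

Lemma Dcut_list G l phi : (forall x, List.In x l -> D G x) -> D (set_of l) phi -> D G phi.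
Proof. exact: Dcut. Qed.

Definition filt (A : algebra S) (F : A -> Prop) := deductive_filter D F.
Definition totl (A : algebra S) (F : A -> Prop) := forall a, F a.
Definition TV (A : algebra S) (X : A -> Prop) :=
  forall phi (v : nat -> A), D (fun _ => False) phi -> X (eval v phi).

Lemma filt_eval (A : algebra S) (F : A -> Prop) l phi (v : nat -> A) :
  filt F -> D (set_of l) phi -> (forall g, List.In g l -> F (eval v g)) -> F (eval v phi).
Proof. by move=> HF H1 H2; apply: (HF _ _ _ (eval_is_hom v) H1). Qed.

Lemma filt_TV (A : algebra S) (F : A -> Prop) : filt F -> TV F.
Proof. by move=> HF phi v H; apply: (HF _ _ _ (eval_is_hom v) H). Qed.

Lemma filt_intro (A : algebra S) (F : A -> Prop) :
  (forall l phi (v : nat -> A), D (set_of l) phi -> (forall g, List.In g l -> F (eval v g)) ->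
     F (eval v phi)) -> filt F.
Proof.
move=> H G phi h Hh /Dfin [l [Hl Hd]] HG.
rewrite (hom_eval Hh); apply: H Hd _ => g /Hl /HG; by rewrite (hom_eval Hh).
Qed.

Lemma filt_total (A : algebra S) : filt (fun _ : A => True).
Proof. by []. Qed.

Lemma filt_cap (A : algebra S) (Es : seq (A -> Prop)) :
  (forall E, List.In E Es -> filt E) -> filt (fun a => forall E, List.In E Es -> E a).
Proof.
move=> H G phi h Hh HG Hp E HE; apply: (H E HE G phi h Hh HG) => g /Hp; exact.
Qed.

Lemma filt_Cn (X : fset S) : filt (A := Fm S) (fun phi => D X phi).
Proof.
apply: filt_intro => l phi v Hd Hl.
rewrite eval_Fm; apply: (Dcut_list (l := map (subst v) l)); last exact: Dsubst.
move=> x /List.in_map_iff [g [<- Hg]]; move: (Hl g Hg); by rewrite eval_Fm.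
Qed.

Lemma filt_closed (F : Fm S -> Prop) phi : filt F -> D F phi -> F phi.
Proof.
move=> HF /Dfin [l [Hl Hd]]; rewrite -(eval_Var phi).
apply: filt_eval HF Hd _ => g /Hl; by rewrite eval_Var.
Qed.

End Logic.

Lemma map_ext_In (T U : Type) (f g : T -> U) (s : seq T) :
  (forall x, List.In x s -> f x = g x) -> map f s = map g s.
Proof. by elim: s => [|x s IH] //= H; rewrite H; [rewrite IH // => y Hy; apply: H; right|left]. Qed.

Lemma In_map (T U : Type) (f : T -> U) (s : seq T) y :
  List.In y (map f s) <-> exists x, List.In x s /\ y = f x.
Proof.
elim: s y => [|x s IH] y /=; first by split=> // [[x []]].
split.
  case=> [<-|H]; first by exists x; auto.
  by have [z [H1 H2]] := proj1 (IH y) H; exists z; auto.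
by case=> z [[<-|Hz] ->]; [left|right; apply: (proj2 (IH _)); exists z].
Qed.

Lemma pigeon m (f : nat -> nat) : (forall i, i <= m -> f i < m) ->
  exists i i', [/\ i < i', i' <= m & f i = f i'].
Proof.
elim: m f => [|m IH] f Hf; first by have := Hf 0 (leqnn 0).
case: (classic (exists2 i, i <= m & f i = f m.+1)) => [[i Hi He]|Hn].
  by exists i, m.+1; split=> //; lia.
have Hne i : i <= m -> f i <> f m.+1 by move=> Hi He; apply: Hn; exists i.
case: (eqVneq (f m.+1) m) => Hfm.
  have Hlt : forall i, i <= m -> f i < m.
    by move=> i Hi; have := Hf i (leqW Hi); have := Hne i Hi; rewrite Hfm; lia.
  have [i [i' [H1 H2 H3]]] := IH f Hlt; exists i, i'; split=> //; lia.
have Hfm' : f m.+1 < m by have := Hf m.+1 (leqnn _); move: Hfm => /eqP; lia.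
pose g i := if f i == m then f m.+1 else f i.
have Hg : forall i, i <= m -> g i < m.
  move=> i Hi; rewrite /g; case: eqVneq => // Hi'.
  by have := Hf i (leqW Hi); move: Hi' => /eqP; lia.
have [i [i' [H1 H2 H3]]] := IH g Hg.
exists i, i'; split=> //; first lia.
move: H3; rewrite /g; case: (eqVneq (f i) m) => Hi; case: (eqVneq (f i') m) => Hi'.
- by rewrite Hi Hi'.
- by move=> He; exfalso; apply: (Hne i'); [lia|rewrite He].
- by move=> He; exfalso; apply: (Hne i); [lia|rewrite He].
- by [].
Qed.

Section Proto.
Variable S : signature.
Variable D : fset S -> term S -> Prop.
Hypothesis HD : is_logic D.
Variable Delta : seq (term S).
Hypothesis HDne : Delta <> [::].
Hypothesis HDvars : forall d, List.In d Delta -> vars_in (fun i => i = 0 \/ i = 1) d.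
Hypothesis HDrefl : forall d, List.In d Delta ->
            D (fun _ => False) (subst (fun i => if i == 1 then Var 0 else Var i) d).
Hypothesis HDmp : D (set_of (Var 0 :: Delta)) (Var 1).
Variable negf : nat -> seq (term S).
Variable n : nat.
Hypothesis HIL1 : forall n, 1 <= n -> forall t, List.In t (negf n) -> vars_in (fun i => i < n) t.
Hypothesis HIL2 : forall (G phis : seq (term S)), phis <> [::] ->
        (inconsistent D (G ++ phis) <->
         forall d, List.In d (negl negf phis) -> D (set_of G) d).

Definition brf (s t : term S) := fun i => if i == 0 then s else if i == 1 then t else Var i.
Definition bridges (s t : term S) := map (subst (brf s t)) Delta.

Lemma br_val (A : algebra S) (X : A -> Prop) (v : nat -> A) s t :
  TV D X -> eval v s = eval v t -> forall x, List.In x (bridges s t) -> X (eval v x).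
Proof.
move=> HX Hst x /In_map [d [Hd ->]].
set w := fun i => if i == 0 then eval v s else v i.
have -> : eval v (subst (brf s t) d) =
    eval w (subst (fun i => if i == 1 then Var 0 else Var i) d).
  rewrite !eval_subst; apply: (eval_ext (HDvars Hd)) => i [->|->] //=.
apply: HX; exact: HDrefl.
Qed.

Lemma br_mp s t : D (set_of (s :: bridges s t)) t.
Proof. exact: (Dsubst HD (brf s t) HDmp). Qed.

Lemma br_use (G : fset S) s t : (forall x, List.In x (bridges s t) -> G x) -> D G s -> D G t.
Proof.
move=> HG Hs; apply: (Dcut_list HD (l := s :: bridges s t)); last exact: br_mp.
by move=> x [<-|Hx] //; apply: Drefl => //; apply: HG.
Qed.

Definition sv (L : seq (term S)) := fun i => nth (Var i) L i.

Lemma negl_map f L : L <> [::] ->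
  negl negf (map (subst f) L) = map (subst f) (negl negf L).
Proof.
move=> HL; have Hs : 1 <= size L by case: L HL.
rewrite /negl size_map -map_comp; apply: map_ext_In => d Hd /=.
rewrite subst_subst; apply: (subst_ext (HIL1 Hs Hd)) => i Hi.
by rewrite /sv (nth_map (Var i)).
Qed.

Lemma incons_self X : X <> [::] -> inconsistent D (negl negf X ++ X).
Proof. by move=> HX; apply: (proj2 (HIL2 _ HX)) => d Hd; apply: Drefl. Qed.

Lemma filt_incons (A : algebra S) (P : A -> Prop) (L : seq (term S)) (v : nat -> A) :
  filt D P -> L <> [::] -> (forall g, List.In g L -> P (eval v g)) ->
  (forall d, List.In d (negl negf L) -> P (eval v d)) -> totl P.
Proof.
move=> HP HL H1 H2 c; set m := size L.
have Hm : 1 <= m by rewrite /m; case: (L) HL.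
pose xs : seq (term S) := map (@Var S) (iota 0 m).
have Hxs : xs <> [::] by rewrite /xs; case: (m) Hm.
have Hd := incons_self Hxs (Var m).
set v' := fun i => if i < m then eval v (nth (Var i) L i) else c.
have -> : c = eval v' (Var m) by rewrite /= /v' ltnn.
apply: (filt_eval HP Hd) => g /List.in_app_iff [Hg|Hg].
- move: Hg; rewrite /negl /xs size_map size_iota => /In_map [d [Hd' ->]].
  have -> : eval v' (subst (sv (map Var (iota 0 m))) d) = eval v (subst (sv L) d).
    rewrite !eval_subst; apply: (eval_ext (HIL1 Hm Hd')) => i Hi.
    by rewrite /sv (nth_map 0) ?size_iota // nth_iota //= /v' Hi.
  by apply: H2; rewrite /negl; apply/In_map; exists d.
- move: Hg => /In_map [i [/In_iota Hi ->]] /=; rewrite /v'.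
  have Hi' : i < m by lia.
  by rewrite Hi'; apply: H1; apply: In_nth.
Qed.

Definition NT := ~ D (fun _ => False) (Var 0).

Lemma NT_negf m : NT -> 1 <= m -> negf m <> [::].
Proof.
move=> HNT Hm He; apply: HNT.
set L := nseq m (Var 0 : term S).
have HL : L <> [::] by rewrite /L; case: (m) Hm.
have H1 : D (set_of L) (Var 1).
  have Hi : inconsistent D ([::] ++ L).
    by apply: (proj2 (HIL2 [::] HL)) => d; rewrite /negl size_nseq He.
  exact: Hi.
case: Delta HDne HDrefl => [//|d0 ds] _ Hr.
set d1 := subst (fun i => if i == 1 then Var 0 else Var i) d0.
have Hd1 : D (fun _ => False) d1 by apply: Hr; left.
have := Dsubst HD (fun i => if i == 0 then d1 else Var 0) H1 => /= H2.
apply: (Dcut HD _ H2) => x; rewrite /L map_nseq /=.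
elim: (m) => [|k IH] //= [<-|]; [exact: Hd1| exact: IH].
Qed.

Lemma NT_Spec (A : algebra S) (F : A -> Prop) : in_Spec D F -> NT.
Proof.
case=> HF Hne _ Hd; apply: Hne => a; split=> // _.
have -> : a = eval (fun _ => a) (Var 0) by [].
exact: filt_TV HF _ _ Hd.
Qed.

Lemma NT_nd G psi : ~ D (set_of G) psi -> NT.
Proof.
move=> Hn Hd; apply: Hn.
have := Dsubst HD (fun _ => psi) (l := [::]) Hd => /= H.
by apply: (Dmono HD (G := set_of [::])) H => x [].
Qed.


Lemma half_dS q : (q.*2.+1)./2 = q.
Proof. by rewrite -[q.*2.+1]/(true + q.*2) half_bit_double. Qed.
Lemma odd_dS q : odd (q.*2.+1). Proof. by rewrite /= odd_double. Qed.

Definition ev2 := subst (fun q => @Var S q.*2).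
Definition od := subst (fun q => @Var S q.*2.+1).

Lemma negl_ev2 L : L <> [::] -> negl negf (map ev2 L) = map ev2 (negl negf L).
Proof. exact: negl_map. Qed.

Definition Sem (A : algebra S) (X : A -> Prop) (b : A) :=
  exists l phi (v : nat -> A), [/\ (forall g, List.In g l -> X (eval v g)),
     D (set_of l) phi & eval v phi = b].

Lemma Sem_incl (A : algebra S) (X : A -> Prop) a : X a -> Sem X a.
Proof.
move=> Ha; exists [:: Var 0], (Var 0), (fun _ => a); split => //.
- by move=> g [<-|].
- by apply: Drefl => //; left.
Qed.

Lemma Sem_mono (A : algebra S) (X Y : A -> Prop) a :
  (forall x, X x -> Y x) -> Sem X a -> Sem Y a.
Proof. by move=> H [l [phi [v [H1 H2 H3]]]]; exists l, phi, v; split=> // g /H1 /H. Qed.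

Definition ext (A : algebra S) (X : A -> Prop) (u : nat -> A) (P : seq (term S)) :=
  fun a => X a \/ exists pi, List.In pi P /\ a = eval u pi.

Lemma Sem_NF (A : algebra S) (X : A -> Prop) (u : nat -> A) P b :
  TV D X -> Sem (ext X u P) b ->
  exists G phi (v : nat -> A), [/\ (forall g, List.In g G -> X (eval v g)),
     (forall q, v q.*2 = u q), D (set_of (G ++ map ev2 P)) phi & eval v phi = b].
Proof.
move=> HX [l [phi [w [Hl Hd Hb]]]].
pose v := fun x => if odd x then w x./2 else u x./2.
have Hod t : eval v (od t) = eval w t.
  by rewrite /od eval_subst; apply: eval_ext_all => q /=; rewrite /v odd_dS half_dS.
have Hev t : eval v (ev2 t) = eval u t.
  by rewrite /ev2 eval_subst; apply: eval_ext_all => q /=; rewrite /v odd_double half_double.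
pose pick g := epsilon (inhabits (@Var S 0)) (fun pi => List.In pi P /\ eval w g = eval u pi).
have Hpick g : ~ X (eval w g) -> List.In g l -> List.In (pick g) P /\ eval w g = eval u (pick g).
  move=> Hn Hg; apply: (@epsilon_spec _ (inhabits (@Var S 0)) (fun pi => List.In pi P /\ eval w g = eval u pi)).
  by case: (Hl g Hg) => [//|[pi [H1 H2]]]; exists pi.
pose prem g := if dec (X (eval w g)) then [:: od g] else bridges (ev2 (pick g)) (od g).
have HinG g x : List.In g l -> List.In x (prem g) -> List.In x (flatten (map prem l)).
  by move=> Hg Hx; apply/In_flatten; exists (prem g); split=> //; apply/In_map; exists g.
exists (flatten (map prem l)), (od phi), v; split.
- move=> x /In_flatten [p [/In_map [g [Hg ->]] Hx]]; move: Hx; rewrite /prem.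
  case: (boolP (dec (X (eval w g)))) => Hdec.
  + by move=> [<-|//]; rewrite Hod; move: Hdec => /(proj1 (decE _)); exact.
  + have Hn : ~ X (eval w g) by move=> /(proj2 (decE _)); rewrite (negbTE Hdec).
    move=> Hx; apply: (br_val HX _ Hx); rewrite Hev Hod; exact: (esym (Hpick g Hn Hg).2).
- by move=> q; rewrite /v odd_double half_double.
- apply: (Dcut_list HD (l := map od l)); last exact: Dsubst.
  move=> x /In_map [g [Hg ->]].
  case: (boolP (dec (X (eval w g)))) => Hdec.
  + apply: Drefl => //; apply/List.in_app_iff; left; apply: (HinG g) => //.
    by rewrite /prem Hdec; left.
  + have Hn : ~ X (eval w g) by move=> /(proj2 (decE _)); rewrite (negbTE Hdec).
    apply: (br_use (s := ev2 (pick g))).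
    * move=> y Hy; apply/List.in_app_iff; left; apply: (HinG g) => //.
      by rewrite /prem (negbTE Hdec).
    * apply: Drefl => //; apply/List.in_app_iff; right; apply/In_map.
      by exists (pick g); split=> //; exact: (Hpick g Hn Hg).1.
- by rewrite Hod.
Qed.

Lemma NF_multi (A : algebra S) (X : A -> Prop) (u : nat -> A) (r : nat)
  (Pf : nat -> seq (term S)) (bf : nat -> A) :
  TV D X -> (forall j, j < r -> Sem (ext X u (Pf j)) (bf j)) ->
  exists G (v : nat -> A) (phif : nat -> term S),
    [/\ (forall g, List.In g G -> X (eval v g)),
     (forall q, v q.*2 = u q) &
     forall j, j < r -> D (set_of (G ++ map ev2 (Pf j))) (phif j) /\ eval v (phif j) = bf j].
Proof.
move=> HX; elim: r => [|r IH] Hr.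
  exists [::], (fun x => u x./2), (fun _ => Var 0); split=> // q.
  by rewrite half_double.
have [G1 [v1 [phi1 [H11 H12 H13]]]] := IH (fun j Hj => Hr j (ltnW Hj)).
have [G2 [psi [v2 [H21 H22 H23 H24]]]] := Sem_NF HX (Hr r (ltnSn r)).
pose t1 x := if odd x then (x./2).*2.*2.+1 else x.
pose t2 x := if odd x then (x./2).*2.+1.*2.+1 else x.
pose V x := if odd x then (if odd x./2 then v2 (x./2./2).*2.+1 else v1 (x./2./2).*2.+1)
            else u x./2.
have Heo x : ~~ odd x -> x = (x./2).*2.
  by move=> Hx; have := odd_double_half x; rewrite (negbTE Hx) add0n.
have Hoo x : odd x -> x = (x./2).*2.+1.
  by move=> Hx; have := odd_double_half x; rewrite Hx add1n.
have HV1 x : V (t1 x) = v1 x.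
  rewrite /V /t1; case: (boolP (odd x)) => Hx.
  + by rewrite odd_dS half_dS odd_double half_double -Hoo.
  + by rewrite (negbTE Hx) {2}(Heo x Hx) H12.
have HV2 x : V (t2 x) = v2 x.
  rewrite /V /t2; case: (boolP (odd x)) => Hx.
  + by rewrite odd_dS half_dS odd_dS half_dS -Hoo.
  + by rewrite (negbTE Hx) {2}(Heo x Hx) H22.
pose tr1 := subst (fun x => @Var S (t1 x)).
pose tr2 := subst (fun x => @Var S (t2 x)).
have Htr1 t : eval V (tr1 t) = eval v1 t by rewrite eval_subst; apply: eval_ext_all.
have Htr2 t : eval V (tr2 t) = eval v2 t by rewrite eval_subst; apply: eval_ext_all.
have Hte1 t : tr1 (ev2 t) = ev2 t.
  rewrite /tr1 /ev2 subst_subst; congr subst; apply: functional_extensionality => q.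
  by rewrite /= /t1 odd_double.
have Hte2 t : tr2 (ev2 t) = ev2 t.
  rewrite /tr2 /ev2 subst_subst; congr subst; apply: functional_extensionality => q.
  by rewrite /= /t2 odd_double.
exists (map tr1 G1 ++ map tr2 G2), V, (fun j => if j < r then tr1 (phi1 j) else tr2 psi).
split.
- move=> g /List.in_app_iff [] /In_map [x [Hx ->]]; [rewrite Htr1; exact: H11|rewrite Htr2; exact: H21].
- move=> q; rewrite /V odd_double half_double.
  by rewrite -H12.
- move=> j Hj; case: (ltnP j r) => Hjr.
  + have [Hd Hb] := H13 j Hjr; split; last by rewrite Htr1.
    have := Dsubst HD (fun x => @Var S (t1 x)) Hd; rewrite map_cat -map_comp.
    rewrite (eq_map (g := ev2) Hte1); apply: Dmono => // x /List.in_app_iff [Hx|Hx].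
    * by apply/List.in_app_iff; left; apply/List.in_app_iff; left.
    * by apply/List.in_app_iff; right.
  + have Hjr' : j = r by lia.
    subst j; split; last by rewrite Htr2.
    have := Dsubst HD (fun x => @Var S (t2 x)) H23; rewrite map_cat -map_comp.
    rewrite (eq_map (g := ev2) Hte2); apply: Dmono => // x /List.in_app_iff [Hx|Hx].
    * by apply/List.in_app_iff; left; apply/List.in_app_iff; right.
    * by apply/List.in_app_iff; right.
Qed.

Lemma close_bridges (A : algebra S) (X : A -> Prop) (v : nat -> A) (G : seq (term S)) r
  (E : nat -> seq (term S)) (phif tf : nat -> term S) :
  TV D X -> (forall g, List.In g G -> X (eval v g)) ->
  (forall j, j < r -> D (set_of (G ++ E j)) (phif j) /\ eval v (phif j) = eval v (tf j)) ->
  let G' := G ++ flatten (map (fun j => bridges (phif j) (tf j)) (iota 0 r)) in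
  (forall g, List.In g G' -> X (eval v g)) /\
  (forall j, j < r -> D (set_of (G' ++ E j)) (tf j)).
Proof.
move=> HX HG Hj G'; split.
- move=> g /List.in_app_iff [/HG //|/In_flatten [p [/In_map [j [/In_iota Hjr ->]] Hp]]].
  apply: (br_val HX _ Hp); apply: (Hj j _).2; lia.
- move=> j Hjr; have [Hd _] := Hj j Hjr.
  apply: (br_use (s := phif j)).
  + move=> x Hx; apply/List.in_app_iff; left; apply/List.in_app_iff; right.
    apply/In_flatten; exists (bridges (phif j) (tf j)); split=> //.
    by apply/In_map; exists j; split=> //; apply/In_iota; lia.
  + apply: (Dmono HD _ Hd) => x /List.in_app_iff [Hx|Hx]; apply/List.in_app_iff; [left|right] => //.
    by apply/List.in_app_iff; left.
Qed.

Lemma Sem_filt (A : algebra S) (X : A -> Prop) : TV D X -> filt D (Sem X).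
Proof.
move=> HX; apply: (filt_intro HD) => l0 psi w Hd Hl.
have [G [v [phif [H1 H2 H3]]]] := @NF_multi A X w (size l0) (fun _ => [::])
   (fun j => eval w (nth (Var 0) l0 j)) HX
   (fun j Hj => Sem_mono (fun x Hx => or_introl Hx) (Hl _ (In_nth _ Hj))).
have Hev t : eval v (ev2 t) = eval w t.
  by rewrite /ev2 eval_subst; apply: eval_ext_all => q /=.
have [H4 H5] := @close_bridges A X v G (size l0) (fun _ => [::]) phif
   (fun j => ev2 (nth (Var 0) l0 j)) HX H1
   (fun j Hj => conj (H3 j Hj).1 (etrans (H3 j Hj).2 (esym (Hev _)))).
set G' := G ++ _ in H4 H5.
exists G', (ev2 psi), v; split; [exact: H4| |by rewrite Hev].
apply: (Dcut_list HD (l := map ev2 l0)); last exact: Dsubst.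
move=> x /In_map [g [Hg ->]]; have [j Hj <-] := In_nth_ex (Var 0) Hg.
by have := H5 j Hj; rewrite cats0.
Qed.

Definition maxp (A : algebra S) (M : A -> Prop) :=
  [/\ filt D M, ~ totl M &
      forall N, filt D N -> ~ totl N -> (forall a, M a -> N a) -> forall a, N a -> M a].

Lemma max_neg (A : algebra S) (M : A -> Prop) (L : seq (term S)) (u : nat -> A) :
  maxp M -> L <> [::] -> (exists g, List.In g L /\ ~ M (eval u g)) ->
  forall d, List.In d (negl negf L) -> M (eval u d).
Proof.
move=> [HM HMt HMm] HL [g [Hg HgM]].
have HTV : TV D (ext M u L) by move=> phi v Hp; left; exact: filt_TV HM _ _ Hp.
have HE := Sem_filt HTV.
have Htot : totl (Sem (ext M u L)).
  apply: NNPP => Hn; apply: HgM; apply: (HMm _ HE Hn).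
  - by move=> a Ha; apply: Sem_incl; left.
  - by apply: Sem_incl; right; exists g.
have HTVM := filt_TV HM.
set r := size (negl negf L).
have [G [v [phif [H1 H2 H3]]]] := @NF_multi A M u r (fun _ => L)
   (fun j => eval u (nth (Var 0) (negl negf L) j)) HTVM (fun j _ => Htot _).
have Hev t : eval v (ev2 t) = eval u t.
  by rewrite /ev2 eval_subst; apply: eval_ext_all => q /=.
have [H4 H5] := @close_bridges A M v G r (fun _ => map ev2 L) phif
   (fun j => ev2 (nth (Var 0) (negl negf L) j)) HTVM H1
   (fun j Hj => conj (H3 j Hj).1 (etrans (H3 j Hj).2 (esym (Hev _)))).
set G' := G ++ _ in H4 H5.
have HL2 : map ev2 L <> [::] by case: (L) HL.
have Hinc : inconsistent D (G' ++ map ev2 L).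
  move=> phi; apply: (Dcut_list HD (l := negl negf (map ev2 L) ++ map ev2 L)); last first.
    exact: incons_self.
  move=> x /List.in_app_iff [Hx|Hx].
  - move: Hx; rewrite negl_ev2 // => /In_map [d [Hd ->]].
    have [j Hj <-] := In_nth_ex (Var 0) Hd; exact: H5.
  - by apply: Drefl => //; apply/List.in_app_iff; right.
have Hneg := proj1 (HIL2 G' HL2) Hinc.
move=> d Hd; rewrite -Hev; apply: (filt_eval HM (Hneg _ _) H4).
by rewrite negl_ev2 //; apply/In_map; exists d.
Qed.

Definition Pi (k : nat) (gam : nat -> nat -> term S) (i : nat) :=
  negl negf (negl negf (map (gam i) (iota 0 k))
     ++ flatten (map (fun j => map (gam j) (iota 0 k)) (iota 0 i))).

Lemma Pi_map f k gam i : NT -> 1 <= k ->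
  map (subst f) (Pi k gam i) = Pi k (fun i t => subst f (gam i t)) i.
Proof.
move=> HNT Hk; rewrite /Pi -negl_map; last first.
  rewrite /negl size_map size_iota; have := NT_negf HNT Hk.
  by case: (negf k).
rewrite map_cat -negl_map; last by case: (k) Hk.
rewrite -map_comp map_flatten -map_comp; congr (negl _ (_ ++ flatten _)).
by apply: eq_map => j /=; rewrite -map_comp.
Qed.

Lemma btw_transfer (A : algebra S) (F : A -> Prop) k gam (u : nat -> A) b :
  btw_law D negf n -> filt D F -> NT -> 1 <= k ->
  (forall i, i <= n -> Sem (ext F u (Pi k gam i)) b) -> F b.
Proof.
move=> Hbtw HF HNT Hk Hi.
have HTV := filt_TV HF.
have [G [v [phif [H1 H2 H3]]]] := @NF_multi A F u n.+1 (Pi k gam) (fun _ => b) HTV Hi.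
have [H4 H5] := @close_bridges A F v G n.+1 (fun i => map ev2 (Pi k gam i)) phif
   (fun _ => phif 0) HTV H1
   (fun j Hj => conj (H3 j Hj).1 (etrans (H3 j Hj).2 (esym (H3 0 isT).2))).
set G' := G ++ _ in H4 H5.
have Hd : D (set_of G') (phif 0).
  apply: (Hbtw k Hk G' (fun i t => ev2 (gam i t)) (phif 0)) => i Hin.
  have := H5 i Hin; rewrite /ev2 Pi_map //.
rewrite -(H3 0 isT).2; exact: filt_eval HF Hd H4.
Qed.


Lemma chain_list (A : algebra S) (C : (A -> Prop) -> Prop) (v : nat -> A) l :
  (exists X, C X) -> (forall X Y, C X -> C Y -> (forall a, X a -> Y a) \/ (forall a, Y a -> X a)) ->
  (forall g, List.In g l -> exists X, C X /\ X (eval v g)) ->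
  exists X, C X /\ forall g, List.In g l -> X (eval v g).
Proof.
move=> [X0 HX0] Hch; elim: l => [|g l IH] H; first by exists X0.
have [X1 [HX1 H1]] := IH (fun g' Hg' => H g' (or_intror Hg')).
have [X2 [HX2 H2]] := H g (or_introl erefl).
case: (Hch _ _ HX1 HX2) => Hs.
- by exists X2; split=> // g' [<-|/H1 /Hs].
- by exists X1; split=> // g' [<-|/H1] //; apply: Hs.
Qed.

Lemma chain_filt (A : algebra S) (C : (A -> Prop) -> Prop) :
  (exists X, C X) -> (forall X Y, C X -> C Y -> (forall a, X a -> Y a) \/ (forall a, Y a -> X a)) ->
  (forall X, C X -> filt D X) -> filt D (fun a => exists X, C X /\ X a).
Proof.
move=> Hne Hch Hf; apply: (filt_intro HD) => l phi v Hd Hl.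
have [X [HX H]] := chain_list Hne Hch Hl.
by exists X; split=> //; apply: filt_eval (Hf X HX) Hd H.
Qed.

Lemma extend (A : algebra S) (F0 : A -> Prop) (Q : (A -> Prop) -> Prop) :
  filt D F0 -> Q F0 ->
  (forall C : (A -> Prop) -> Prop, (exists X, C X) ->
     (forall X, C X -> [/\ filt D X, Q X & forall a, F0 a -> X a]) ->
     (forall X Y, C X -> C Y -> (forall a, X a -> Y a) \/ (forall a, Y a -> X a)) ->
     Q (fun a => exists X, C X /\ X a)) ->
  exists M, [/\ filt D M, Q M, (forall a, F0 a -> M a) &
     forall N, filt D N -> Q N -> (forall a, M a -> N a) -> forall a, N a -> M a].
Proof.
move=> HF0 HQ0 Hch.
pose T := {X : A -> Prop | [/\ filt D X, Q X & forall a, F0 a -> X a]}.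
pose R (s t : T) := `[< forall a, proj1_sig s a -> proj1_sig t a >].
have t0 : T by exists F0; split.
have [|||t Ht] := @ZL_preorder T t0 R.
- by move=> t; apply/asboolP.
- by move=> r s t /asboolP H1 /asboolP H2; apply/asboolP => a /H1 /H2.
- move=> Ch Htot; case: (classic (exists s, Ch s)) => [[s0 Hs0]|Hn]; last first.
    by exists t0 => s Hs; exfalso; apply: Hn; exists s.
  pose C := fun X => exists s, Ch s /\ proj1_sig s = X.
  have HCne : exists X, C X by exists (proj1_sig s0), s0.
  have HCp : forall X, C X -> [/\ filt D X, Q X & forall a, F0 a -> X a].
    by move=> X [s [_ <-]]; exact: proj2_sig s.
  have HCch : forall X Y, C X -> C Y -> (forall a, X a -> Y a) \/ (forall a, Y a -> X a).
    move=> X Y [s [Hs <-]] [s' [Hs' <-]].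
    by case: (Htot s s' Hs Hs') => /asboolP H; [left|right].
  have HU : [/\ filt D (fun a => exists X, C X /\ X a), Q (fun a => exists X, C X /\ X a)
      & forall a, F0 a -> exists X, C X /\ X a].
    split; [apply: (chain_filt HCne HCch) => X HX; by case: (HCp X HX)|exact: Hch|].
    move=> a Ha; exists (proj1_sig s0); split; first by exists s0.
    by case: (proj2_sig s0) => _ _; apply.
  exists (@exist _ (fun X => [/\ filt D X, Q X & forall a, F0 a -> X a]) _ HU) => s Hs; apply/asboolP => a Ha /=.
  by exists (proj1_sig s); split=> //; exists s.
- exists (proj1_sig t); case: (proj2_sig t) => H1 H2 H3; split=> // N HN HQN HtN.
  have HsN : [/\ filt D N, Q N & forall a, F0 a -> N a] by split=> // a /H3 /HtN.
  have := Ht (@exist _ (fun X => [/\ filt D X, Q X & forall a, F0 a -> X a]) _ HsN) (introT (asboolP _) HtN).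
  by move=> /asboolP.
Qed.

Lemma some_elem (A : algebra S) (F : A -> Prop) : ~ totl F -> exists a : A, ~ F a.
Proof. by move=> H; apply: NNPP => Hn; apply: H => a; apply: NNPP => Ha; apply: Hn; exists a. Qed.

Lemma extend_max (A : algebra S) (F0 : A -> Prop) :
  filt D F0 -> ~ totl F0 -> exists M, maxp M /\ forall a, F0 a -> M a.
Proof.
move=> HF0 Ht0.
have [a0 Ha0] := some_elem Ht0.
have Hc : forall C : (A -> Prop) -> Prop, (exists X, C X) ->
     (forall X, C X -> [/\ filt D X, ~ totl X & forall a, F0 a -> X a]) ->
     (forall X Y, C X -> C Y -> (forall a, X a -> Y a) \/ (forall a, Y a -> X a)) ->
     ~ totl (fun a => exists X, C X /\ X a).
  move=> C Hne Hp Hch Htot.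
  pose K := Var 0 :: negl negf [:: Var 0].
  have [X [HX HXK]] := @chain_list A C (fun _ => a0) K Hne Hch (fun g _ => Htot _).
  have [HXf HXq _] := Hp X HX; apply: HXq.
  apply: (filt_incons HXf (L := [:: Var 0]) (v := fun _ => a0)) => //.
  - by move=> g [<-|//]; apply: HXK; left.
  - by move=> d Hd; apply: HXK; right.
have [M [H1 H2 H3 H4]] := @extend A F0 (fun X => ~ totl X) HF0 Ht0 Hc.
by exists M; split.
Qed.

Lemma extend_omit (A : algebra S) (F0 : A -> Prop) e :
  filt D F0 -> ~ F0 e -> exists M, [/\ filt D M, ~ M e, (forall a, F0 a -> M a) &
     forall N, filt D N -> ~ N e -> (forall a, M a -> N a) -> forall a, N a -> M a].
Proof.
move=> HF0 He; apply: (@extend A F0 (fun X => ~ X e) HF0 He).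
by move=> C _ Hp _ [X [HX HXe]]; case: (Hp X HX).
Qed.

Lemma maxp_Spec (A : algebra S) (M : A -> Prop) : maxp M -> in_Spec D M.
Proof.
move=> [HM Ht Hm]; split=> //; first by move=> H; apply: Ht => a; apply/H.
move=> [G [H [HG HH HnG HnH Heq]]].
have HtG : totl G.
  apply: NNPP => Hn; apply: HnG => a; split; last by move=> /Heq [].
  by apply: (Hm G HG Hn) => b /Heq [].
have HtH : totl H.
  apply: NNPP => Hn; apply: HnH => a; split; last by move=> /Heq [].
  by apply: (Hm H HH Hn) => b /Heq [].
by apply: Ht => a; apply/Heq.
Qed.

Lemma maxp_maxSpec (A : algebra S) (M : A -> Prop) : maxp M -> maximal_in_Spec D M.
Proof.
move=> HM; split; first exact: maxp_Spec.
move=> H [HH HHt _] HMH; case: HM => _ _ Hm; apply: Hm => // Ht; apply: HHt => a.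
by split.
Qed.

Lemma Spec_ext (A : algebra S) (H : A -> Prop) : in_Spec D H ->
  exists M, maxp M /\ forall a, H a -> M a.
Proof.
move=> [HH Ht _]; apply: extend_max => // Htt; apply: Ht => a; split=> //.
Qed.

Lemma meet_list (A : algebra S) (F : A -> Prop) (Es : seq (A -> Prop)) :
  in_Spec D F -> (forall E, List.In E Es -> filt D E /\ forall a, F a -> E a) ->
  (forall a, (forall E, List.In E Es -> E a) -> F a) ->
  exists E, List.In E Es /\ forall a, E a -> F a.
Proof.
move=> [HF HFt HFm]; elim: Es => [|E Es IH] HE Hcap.
  by exfalso; apply: HFt => a; split=> // _; apply: Hcap.
pose I := fun a => forall E', List.In E' Es -> E' a.
have HI : filt D I by apply: filt_cap => E' HE'; apply: (HE E' (or_intror HE')).1.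
have [HEf HEF] := HE E (or_introl erefl).
case: (classic (forall a, E a -> F a)) => [HEs|HEs]; first by exists E; split=> //; left.
case: (classic (forall a, I a -> F a)) => [HIs|HIs].
  have [E' [H1 H2]] := IH (fun E' H => HE E' (or_intror H)) HIs.
  by exists E'; split=> //; right.
exfalso; apply: HFm; exists E, I; split=> //.
- by move=> Hs; apply: HEs => a /Hs.
- by move=> Hs; apply: HIs => a /Hs.
- move=> a; split.
  + move=> Ha; split; first exact: HEF.
    by move=> E' HE'; apply: (HE E' (or_intror HE')).2.
  + by move=> [H1 H2]; apply: Hcap => E' [<-|]; [|apply: H2].
Qed.


Lemma same_sym (A : algebra S) (X Y : A -> Prop) : same_set X Y -> same_set Y X.
Proof. by move=> H a; split=> /H. Qed.

Lemma no_many (A : algebra S) (F : A -> Prop) (Ms : nat -> A -> Prop) :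
  btw_law D negf n -> in_Spec D F ->
  (forall i, i <= n -> maxp (Ms i) /\ forall a, F a -> Ms i a) ->
  (forall i j, i <= n -> j <= n -> i <> j -> ~ same_set (Ms i) (Ms j)) -> False.
Proof.
move=> Hbtw HF HMs Hdist.
have HNT := NT_Spec HF.
have HFf : filt D F by case: HF.
have [a0 Ha0] : exists a0 : A, ~ F a0.
  by apply: some_elem; case: HF => _ H _ Ht; apply: H => a; split.
have [d0 Hd0] : exists d0, List.In d0 Delta by case: (Delta) HDne => [//|d ds] _; exists d; left.
set t0 := eval (fun _ => a0) (subst (fun i => if i == 1 then Var 0 else Var i) d0).
have Ht0 X : filt D X -> X t0 by move=> HX; apply: filt_TV HX _ _ (HDrefl Hd0).
have Hinc i j : i <= n -> j <= n -> i <> j -> exists a, Ms i a /\ ~ Ms j a.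
  move=> Hi Hj Hij; apply: NNPP => Hn; apply: (Hdist i j Hi Hj Hij).
  have Hsub : forall a, Ms i a -> Ms j a.
    by move=> a Ha; apply: NNPP => Hna; apply: Hn; exists a.
  case: (HMs i Hi) => [[_ _ Hm] _]; case: (HMs j Hj) => [[Hf Ht _] _].
  by move=> a; split; [apply: Hsub|apply: (Hm _ Hf Ht Hsub)].
have [af Haf] : exists af : nat * nat -> A, forall p,
    (p.1 <= n -> Ms p.1 (af p)) /\ (p.1 <= n -> p.2 <= n -> p.1 <> p.2 -> ~ Ms p.2 (af p)).
  apply: (@fchoice (nat * nat) A (fun p x => (p.1 <= n -> Ms p.1 x) /\ (p.1 <= n -> p.2 <= n -> p.1 <> p.2 -> ~ Ms p.2 x))) => [[i j]] /=.
  case: (classic ([/\ i <= n, j <= n & i <> j])) => [[Hi Hj Hij]|Hn].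
    by have [a [H1 H2]] := Hinc i j Hi Hj Hij; exists a; split.
  exists t0; split; first by move=> Hi; apply: Ht0; case: (HMs i Hi) => [[]].
  by move=> Hi Hj Hij; exfalso; apply: Hn.
pose u := fun w => af (w %/ n.+1, w %% n.+1).
pose L i := map (fun j => @Var S (i * n.+1 + j)) (iota 0 n.+1).
have Hu i j : j < n.+1 -> u (i * n.+1 + j) = af (i, j).
  by move=> Hj; rewrite /u divnMDl // divn_small // addn0 modnMDl modn_small.
have HLne i : L i <> [::] by [].
have HLin i j : j <= n -> List.In (Var (i * n.+1 + j)) (L i).
  by move=> Hj; apply/In_map; exists j; split=> //; apply/In_iota; lia.
have HLval i g : List.In g (L i) -> exists2 j, j <= n & g = Var (i * n.+1 + j).
  by move=> /In_map [j [/In_iota Hj ->]]; exists j => //; lia.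
pose gm i := negl negf (L i).
set k := size (negf n.+1).
have Hk : 1 <= k by rewrite /k; have := NT_negf HNT (isT : 0 < n.+1); case: (negf n.+1).
have Hsg i : size (gm i) = k by rewrite /gm /negl size_map /L size_map size_iota.
pose gam i t := nth (Var 0) (gm i) t.
have Hgam i : map (gam i) (iota 0 k) = gm i by rewrite -(Hsg i) -/(mkseq _ _) mkseq_nth.
have Hgne i : gm i <> [::] by move=> H; move: (Hsg i); rewrite H /=; lia.
have HA i j : i <= n -> j <= n -> i <> j -> forall d, List.In d (gm i) -> Ms j (eval u d).
  move=> Hi Hj Hij; apply: max_neg (HMs j Hj).1 (HLne i) _.
  exists (Var (i * n.+1 + j)); split; first exact: HLin.
  by rewrite /= Hu //; exact: (Haf (i, j)).2.
have HLM i : i <= n -> forall g, List.In g (L i) -> Ms i (eval u g).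
  move=> Hi g /HLval [j Hj ->] /=; rewrite Hu; last by lia.
  exact: (Haf (i, j)).1.
have HB i : i <= n -> forall d, List.In d (negl negf (gm i)) -> Ms i (eval u d).
  move=> Hi; apply: max_neg (HMs i Hi).1 (Hgne i) _.
  apply: NNPP => Hn; case: (HMs i Hi) => [[Hf Ht _] _]; apply: Ht.
  apply: (filt_incons Hf (HLne i) (HLM i Hi)) => d Hd.
  by apply: NNPP => Hnd; apply: Hn; exists d.
pose E i := Sem (ext F u (Pi k gam i)).
have HTV i : TV D (ext F u (Pi k gam i)) by move=> phi v Hp; left; exact: filt_TV HFf _ _ Hp.
have HEf i : filt D (E i) by exact: Sem_filt (HTV i).
have HFE i a : F a -> E i a by move=> Ha; apply: Sem_incl; left.
have Hcap a : (forall i, i <= n -> E i a) -> F a.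
  by move=> H; exact: btw_transfer Hbtw HFf HNT Hk H.
have HEs : forall Ei, List.In Ei (map E (iota 0 n.+1)) -> filt D Ei /\ forall a, F a -> Ei a.
  by move=> Ei /In_map [i [_ ->]]; split; [exact: HEf|exact: HFE].
have HEc : forall a, (forall Ei, List.In Ei (map E (iota 0 n.+1)) -> Ei a) -> F a.
  move=> a Ha; apply: Hcap => i Hi; apply: Ha; apply/In_map; exists i; split=> //.
  by apply/In_iota; lia.
have [Ei [HEi HEiF]] := @meet_list A F (map E (iota 0 n.+1)) HF HEs HEc.
case/In_map: HEi => i [/In_iota Hi ->] in HEiF.
have Hin : i <= n by lia.
case: (HMs i Hin) => [[Hf Ht _] HFM].
pose Y := negl negf (gm i) ++ flatten (map gm (iota 0 i)).
have HPi : Pi k gam i = negl negf Y.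
  rewrite /Pi /Y Hgam; congr (negl _ (_ ++ flatten _)); apply: eq_map => j; exact: Hgam.
have HYne : Y <> [::].
  rewrite /Y /negl Hsg; have := NT_negf HNT Hk.
  by case: (negf k).
apply: Ht; apply: (filt_incons Hf HYne (v := u)).
- move=> g /List.in_app_iff [Hg|/In_flatten [p [/In_map [j [/In_iota Hj ->]] Hg]]].
  + exact: HB.
  + apply: (HA j i) => //; lia.
- move=> d Hd; apply: HFM; apply: HEiF; apply: Sem_incl; right; exists d; split=> //.
  by rewrite HPi.
Qed.


Lemma dir1 : btw_law D negf n -> 1 <= n ->
  (forall (A : algebra S) (F : A -> Prop), in_Spec D F ->
     exists Gs : seq (A -> Prop),
       [/\ 1 <= size Gs, size Gs <= n,
           (forall G, List.In G Gs -> maximal_in_Spec D G)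
         & (forall H : A -> Prop, in_Spec D H -> (forall a, F a -> H a) ->
              exists2 G, List.In G Gs & (forall a, H a -> G a))]).
Proof.
move=> Hbtw hn A F HF.
pose P m := exists Ms : seq (A -> Prop), [/\ size Ms = m,
   (forall M, List.In M Ms -> maxp M /\ forall a, F a -> M a) &
   forall i j, i < m -> j < m -> i <> j -> ~ same_set (nth (fun _ => True) Ms i) (nth (fun _ => True) Ms j)].
have HP1 : P 1.
  have [M [HM HFM]] := Spec_ext HF.
  exists [:: M]; split=> //; first by move=> M' [<-|].
  by move=> [|i] [|j].
have HPn : ~ P n.+1.
  move=> [Ms [Hs HMs Hd]].
  apply: (@no_many A F (fun i => nth (fun _ => True) Ms i) Hbtw HF).
  - by move=> i Hi; apply: HMs; apply: In_nth; rewrite Hs.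
  - by move=> i j Hi Hj; apply: Hd.
have [m [Hm1 Hm2 [Ms [Hs HMs Hd]] HPm]] : exists m, [/\ 1 <= m, m <= n, P m & ~ P m.+1].
  have : forall b, 1 <= b -> ~ P b -> exists m, [/\ 1 <= m, m < b, P m & ~ P m.+1].
    elim=> [//|b IH] Hb HPb.
    have Hb1 : 1 <= b by destruct b as [|b']; [exfalso; apply: HPb|].
    case: (classic (P b)) => HPb'; first by exists b; split.
    have [m [H1 H2 H3 H4]] := IH Hb1 HPb'.
    by exists m; split=> //; lia.
  move=> /(_ n.+1 isT HPn) [m [H1 H2 H3 H4]]; exists m; split=> //.
exists Ms; split.
- by rewrite Hs.
- by rewrite Hs.
- by move=> G /HMs [HG _]; exact: maxp_maxSpec.
- move=> H HH HFH.
  have [N [HN HHN]] := Spec_ext HH.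
  case: (classic (exists2 i, i < m & same_set N (nth (fun _ => True) Ms i))) => [[i Hi HNi]|Hn].
    exists (nth (fun _ => True) Ms i); first by apply: In_nth; rewrite Hs.
    by move=> a /HHN /HNi.
  exfalso; apply: HPm; exists (N :: Ms); split; first by rewrite /= Hs.
    by move=> M [<-|/HMs //]; split=> // a /HFH /HHN.
  move=> [|i] [|j] //= Hi Hj Hij.
  + by move=> Hs'; apply: Hn; exists j.
  + by move=> Hs'; apply: Hn; exists i => //; apply: same_sym.
  + by apply: Hd => //; move=> E; apply: Hij; rewrite E.
Qed.

Lemma fin_list (X : fset S) (K : seq (term S)) :
  (forall x, List.In x K -> D X x) ->
  exists l, (forall g, List.In g l -> X g) /\ forall x, List.In x K -> D (set_of l) x.
Proof.
elim: K => [|x K IH] H; first by exists [::].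
have [l1 [H11 H12]] := IH (fun y Hy => H y (or_intror Hy)).
have [l2 [H21 H22]] := Dfin HD (H x (or_introl erefl)).
exists (l1 ++ l2); split.
- by move=> g /List.in_app_iff [/H11|/H21].
- move=> y [<-|Hy].
  + by apply: (Dmono HD _ H22) => z Hz; apply/List.in_app_iff; right.
  + by apply: (Dmono HD _ (H12 y Hy)) => z Hz; apply/List.in_app_iff; left.
Qed.

Lemma dir2 : 1 <= n ->
  (forall (A : algebra S) (F : A -> Prop), in_Spec D F ->
     exists Gs : seq (A -> Prop),
       [/\ 1 <= size Gs, size Gs <= n,
           (forall G, List.In G Gs -> maximal_in_Spec D G)
         & (forall H : A -> Prop, in_Spec D H -> (forall a, F a -> H a) ->
              exists2 G, List.In G Gs & (forall a, H a -> G a))]) ->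
  btw_law D negf n.
Proof.
move=> hn Hr k Hk G gam psi Hyp.
apply: NNPP => HnG.
have HNT := NT_nd HnG.
pose F0 := fun phi => D (set_of G) phi.
have HF0 : filt D (A := Fm S) F0 := @filt_Cn S D HD (set_of G).
have [F [HF HFpsi HF0F HFmax]] := @extend_omit (Fm S) F0 psi HF0 HnG.
have HFS : in_Spec D F.
  split=> //; first by move=> H; apply: HFpsi; apply: (proj2 (H psi)).
  move=> [G1 [H1 [HG1 HH1 Hn1 Hn2 Heq]]].
  have HG1p : G1 psi.
    apply: NNPP => Hn; apply: Hn1 => a; split; last by move=> /Heq [].
    by apply: (HFmax _ HG1 Hn) => b /Heq [].
  have HH1p : H1 psi.
    apply: NNPP => Hn; apply: Hn2 => a; split; last by move=> /Heq [].
    by apply: (HFmax _ HH1 Hn) => b /Heq [].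
  by apply: HFpsi; apply/Heq.
have [Gs [Hs1 Hs2 HGmax Hcov]] := Hr (Fm S) F HFS.
pose Y i := negl negf (map (gam i) (iota 0 k)) ++ flatten (map (fun j => map (gam j) (iota 0 k)) (iota 0 i)).
have HYne i : Y i <> [::].
  rewrite /Y /negl size_map size_iota; have := NT_negf HNT Hk.
  by case: (negf k).
pose T i := fun phi => D (fun x => F x \/ List.In x (Y i)) phi.
have HT i : filt D (A := Fm S) (T i) := @filt_Cn S D HD _.
have HFT i a : F a -> T i a by move=> Ha; apply: Drefl => //; left.
have HYT i a : List.In a (Y i) -> T i a by move=> Ha; apply: Drefl => //; right.
have HTt i : i <= n -> ~ totl (A := Fm S) (T i).
  move=> Hi Ht.
  set K := negl negf [:: @Var S 0] ++ [:: Var 0].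
  have [l [Hl HlK]] := @fin_list _ K (fun x _ => Ht x).
  pose lF := filter (fun g => dec (F g)) l.
  have HlF g : List.In g lF -> F g.
    rewrite /lF; elim: (l) => [|x l' IH] //=; case: (boolP (dec (F x))) => Hx /=.
    + by case=> [<-|/IH //]; apply: (proj1 (decE _)).
    + exact: IH.
  have HlF2 g : List.In g l -> F g -> List.In g lF.
    rewrite /lF; elim: (l) => [|x l' IH] //= [<-|Hg] HFg.
    + have -> : dec (F x) = true by apply: (proj2 (decE _)).
      by left.
    + by case: (dec (F x)) => /=; [right|]; apply: IH.
  have Hinc : inconsistent D (lF ++ Y i).
    move=> phi; apply: (Dcut_list HD (l := K)); last by apply: incons_self.
    move=> x Hx; apply: (Dmono HD _ (HlK x Hx)) => g Hg; apply/List.in_app_iff.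
    by case: (Hl g Hg) => [HFg|HYg]; [left; apply: HlF2|right].
  have Hneg := proj1 (HIL2 lF (HYne i)) Hinc.
  apply: HFpsi; apply: (filt_closed HD HF); apply: (Dmono HD _ (Hyp i Hi)).
  move=> x /List.in_app_iff [Hx|Hx].
  - by apply: HF0F; apply: Drefl.
  - apply: (filt_closed HD HF); apply: (Dmono HD _ (Hneg x Hx)) => g; exact: HlF.
have [H HH] : exists H : nat -> Fm S -> Prop, forall i,
    i <= n -> maxp (H i) /\ forall a, T i a -> H i a.
  apply: (@fchoice nat (Fm S -> Prop) (fun i M => i <= n -> maxp M /\ forall a, T i a -> M a)) => i.
  case: (leqP i n) => Hi; last by exists F => H'; lia.
  by have [M HM] := extend_max (HT i) (HTt i Hi); exists M.
have [f Hf] : exists f : nat -> nat, forall i, i <= n ->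
    [/\ f i < size Gs, (forall a, H i a -> nth (fun _ => True) Gs (f i) a)
      & (forall a, nth (fun _ => True) Gs (f i) a -> H i a)].
  apply: (@fchoice nat nat (fun i j => i <= n -> [/\ j < size Gs, (forall a, H i a -> nth (fun _ => True) Gs j a)
      & (forall a, nth (fun _ => True) Gs j a -> H i a)])) => i.
  case: (leqP i n) => Hi; last by exists 0 => H'; lia.
  have [HHi HTH] := HH i Hi.
  have [Gc HGc HHG] := Hcov (H i) (maxp_Spec HHi) (fun a Ha => HTH a (HFT i a Ha)).
  have [j Hj Hnth] := In_nth_ex (fun _ => True) HGc.
  exists j => _; rewrite Hnth; split=> //.
  have [[HGf HGt _] _] := HGmax Gc HGc.
  case: HHi => _ _ Hm; apply: (Hm _ HGf) => // Htt; apply: HGt => a; split=> //.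
have [i [i' [Hii' Hi'm Hfe]]] := @pigeon (size Gs) f
  (fun i Hi => let: And3 h _ _ := Hf i (leq_trans Hi Hs2) in h).
have Hin : i <= n by lia.
have Hi'n : i' <= n by lia.
set Gc := nth (fun _ => True) Gs (f i).
have [[HGf HGt _] _] := HGmax Gc (In_nth _ (let: And3 h _ _ := Hf i Hin in h)).
apply: HGt => a0; split=> // _; move: a0; change (totl (A := Fm S) Gc).
have HL : map (gam i) (iota 0 k) <> [::] by case: (k) Hk.
apply: (@filt_incons (Fm S) Gc _ (@Var S) HGf HL).

- move=> g Hg; rewrite eval_Var.
  have [_ H3 _] := Hf i' Hi'n; rewrite /Gc Hfe; apply: H3; apply: (HH i' Hi'n).2.
  apply: HYT; apply/List.in_app_iff; right; apply/In_flatten.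
  exists (map (gam i) (iota 0 k)); split=> //; apply/In_map; exists i; split=> //.
  by apply/In_iota; lia.
- move=> d Hd; rewrite eval_Var.
  have [_ H2 _] := Hf i Hin; apply: H2; apply: (HH i Hin).2.
  by apply: HYT; apply/List.in_app_iff; left.
Qed.

End Proto.



Theorem theorem8p6 (S : signature) (D : fset S -> term S -> Prop)
  (HD : is_logic D) (Hproto : protoalgebraic D)
  (negf : nat -> seq (term S)) (HIL : IL_family D negf)
  (n : nat) (hn : 1 <= n) :
  btw_law D negf n <->
  (forall (A : algebra S) (F : A -> Prop), in_Spec D F ->
     exists Gs : seq (A -> Prop),
       [/\ 1 <= size Gs, size Gs <= n,
           (forall G, List.In G Gs -> maximal_in_Spec D G)
         & (forall H : A -> Prop, in_Spec D H -> (forall a, F a -> H a) ->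
              exists2 G, List.In G Gs & (forall a, H a -> G a))]).
Proof.
case: Hproto => Delta [HDne HDvars HDrefl HDmp].
case: HIL => HIL1 HIL2.
split=> H.
- exact: (dir1 HD HDne HDvars HDrefl HDmp HIL1 HIL2 H hn).
- exact: (dir2 HD HDne HDrefl HIL1 HIL2 hn H).
Qed.
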